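(* Let \(R\) be a torsionfree bornological \(V\)-algebra. If \(R\) is nuclear or a dagger algebra, then the canonical map \((R')^{\dagger}\to (R^{\dagger})'\) is an isomorphism.
   Context: Let \(V\) be a complete discrete valuation ring with uniformiser \(\pi\). A bornology on a set is a collection of subsets (called bounded) containing all finite subsets and closed under finite unions and under taking subsets. A bornological \(V\)-module is a \(V\)-module with a bornology such that every bounded subset is contained in a bounded \(V\)-submodule; it is complete if every bounded subset is contained in a bounded \(\pi\)-adically complete \(V\)-submodule, and torsionfree if it is torsionfree as a \(V\)-module and \(\pi^{-1}S=\{x:\pi x\in S\}\) is bounded for every bounded \(S\). A bornological \(V\)-algebra has bounded multiplication; it is semidagger if \(\sum_{i\ge0}\pi^iS^{i+1}\) is bounded for every bounded \(S\), and a dagger algebra if it is complete, torsionfree and semidagger. The linear growth bornology on \(R\) is generated by the submodules \(\sum_{i\ge0}\pi^iS^{i+1}\) for bounded \(S\); \(R^{\dagger}\) is the completion of \(R\) with the linear growth bornology, which for torsionfree \(R\) is a dagger algebra receiving a canonical bounded homomorphism \(R\to R^\dagger\) through which every bounded homomorphism from \(R\) to a dagger algebra factors uniquely. A subset \(S\subseteq M\) is compactoid if there is a bounded \(V\)-submodule \(T\subseteq M\) with \(S\subseteq T\) such that for every \(n\) there is a finite \(F_n\subseteq T\) with \(S\subseteq VF_n+\pi^nT\); \(M'\) is \(M\) with the compactoid bornology, and \(M\) is nuclear if all bounded subsets are compactoid. For torsionfree \(R\), \(R'\) is torsionfree and \((R^\dagger)'\) is a dagger algebra; the canonical map \((R')^\dagger\to(R^\dagger)'\)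 is the unique bounded homomorphism extending the bounded homomorphism \(R'\to(R^\dagger)'\) induced by \(R\to R^\dagger\). *)

(* Defs.v *)
From HB Require Import structures.
From mathcomp Require Import all_boot all_order all_algebra.
Set Implicit Arguments.
Unset Strict Implicit.
Unset Printing Implicit Defensive.
Import GRing.Theory.
Local Open Scope ring_scope.

Definition cdvr (V : idomainType) (pi : V) : Prop :=
  [/\ pi != 0, pi \notin GRing.unit,
   (forall x : V, x != 0 -> exists (u : V) (n : nat), u \is a GRing.unit /\ x = u * pi ^+ n) &
   (forall x : nat -> V, (forall n, exists y, x n.+1 - x n = pi ^+ n * y) ->
      exists l, forall n, exists y, l - x n = pi ^+ n * y)].

Definition bsubs (M : Type) (S T : M -> Prop) := forall x, S x -> T x.

Definition bimage (M N : Type) (f : M -> N) (S : M -> Prop) : N -> Prop :=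
  fun y => exists x, S x /\ y = f x.

Definition submod (V : idomainType) (M : lmodType V) (T : M -> Prop) : Prop :=
  [/\ T 0, (forall x y, T x -> T y -> T (x + y)) & (forall (a : V) x, T x -> T (a *: x))].

Definition bspan (V : idomainType) (M : lmodType V) (X : M -> Prop) : M -> Prop :=
  fun x => forall T, submod T -> bsubs X T -> T x.

Definition bsmul (V : idomainType) (M : lmodType V) (c : V) (T : M -> Prop) : M -> Prop :=
  fun x => exists t, T t /\ x = c *: t.

Definition bornology (M : eqType) (B : (M -> Prop) -> Prop) : Prop :=
  [/\ (forall s : seq M, B (fun x => x \in s)),
      (forall S T, B S -> B T -> B (fun x => S x \/ T x)) &
      (forall S T, bsubs S T -> B T -> B S)].

Definition gen_born (M : eqType) (F : (M -> Prop) -> Prop) : (M -> Prop) -> Prop :=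
  fun X => forall B', bornology B' -> (forall Y, F Y -> B' Y) -> B' X.

Definition bmod (V : idomainType) (M : lmodType V) (B : (M -> Prop) -> Prop) : Prop :=
  bornology B /\ (forall S, B S -> exists T, [/\ B T, submod T & bsubs S T]).

Definition padic_complete (V : idomainType) (pi : V) (M : lmodType V) (T : M -> Prop) : Prop :=
  (forall x, T x -> (forall n, bsmul (pi ^+ n) T x) -> x = 0) /\
  (forall u : nat -> M, (forall n, T (u n)) ->
     (forall n, bsmul (pi ^+ n) T (u n.+1 - u n)) ->
     exists l, T l /\ forall n, bsmul (pi ^+ n) T (l - u n)).

Definition bcomplete (V : idomainType) (pi : V) (M : lmodType V) (B : (M -> Prop) -> Prop) : Prop :=
  forall S, B S -> exists T, [/\ B T, submod T, padic_complete pi T & bsubs S T].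

Definition torsionfree (V : idomainType) (pi : V) (M : lmodType V) (B : (M -> Prop) -> Prop) : Prop :=
  (forall (a : V) (x : M), a *: x = 0 -> a = 0 \/ x = 0) /\
  (forall S, B S -> B (fun x => S (pi *: x))).

Definition bounded_map (M N : Type) (BM : (M -> Prop) -> Prop) (BN : (N -> Prop) -> Prop)
  (f : M -> N) : Prop := forall S, BM S -> BN (bimage f S).

Definition blin (V : idomainType) (M N : lmodType V) (f : M -> N) : Prop :=
  forall (a : V) x y, f (a *: x + y) = a *: f x + f y.

(* (not necessarily unital or commutative) bornological V-algebra *)
Definition balg (V : idomainType) (M : lmodType V) (mul : M -> M -> M)
  (B : (M -> Prop) -> Prop) : Prop :=
  [/\ bmod B,
      (forall (a : V) x y z, mul (a *: x + y) z = a *: mul x z + mul y z),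
      (forall (a : V) x y z, mul z (a *: x + y) = a *: mul z x + mul z y),
      (forall x y z, mul x (mul y z) = mul (mul x y) z) &
      (forall S T, B S -> B T -> B (fun z => exists x y, [/\ S x, T y & z = mul x y]))].

Definition bhom (V : idomainType) (M N : lmodType V) (mulM : M -> M -> M) (mulN : N -> N -> N)
  (f : M -> N) : Prop := blin f /\ forall x y, f (mulM x y) = mulN (f x) (f y).

Definition lg_gens (V : idomainType) (pi : V) (M : lmodType V) (mul : M -> M -> M)
  (S : M -> Prop) : M -> Prop :=
  fun z => exists (i : nat) (x : M) (s : seq M),
    [/\ size s = i, S x, (forall y, y \in s -> S y) & z = pi ^+ i *: foldl mul x s].

(* sum_{i >= 0} pi^i S^{i+1} : the V-submodule generated by lg_gens *)
Definition lgset (V : idomainType) (pi : V) (M : lmodType V) (mul : M -> M -> M)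
  (S : M -> Prop) : M -> Prop := bspan (lg_gens pi mul S).

Definition semidagger (V : idomainType) (pi : V) (M : lmodType V) (mul : M -> M -> M)
  (B : (M -> Prop) -> Prop) : Prop := forall S, B S -> B (lgset pi mul S).

Definition dagger_alg (V : idomainType) (pi : V) (M : lmodType V) (mul : M -> M -> M)
  (B : (M -> Prop) -> Prop) : Prop :=
  [/\ balg mul B, bcomplete pi B, torsionfree pi B & semidagger pi mul B].

Definition lgborn (V : idomainType) (pi : V) (M : lmodType V) (mul : M -> M -> M)
  (B : (M -> Prop) -> Prop) : (M -> Prop) -> Prop :=
  gen_born (fun Y => exists S, B S /\ Y = lgset pi mul S).

(* compactoid subsets and compactoid bornology M' *)
Definition compactoid (V : idomainType) (pi : V) (M : lmodType V)
  (B : (M -> Prop) -> Prop) (S : M -> Prop) : Prop :=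
  exists T, [/\ B T, submod T, bsubs S T &
    forall n : nat, exists F : seq M, (forall y, y \in F -> T y) /\
      bsubs S (fun x => exists a b, [/\ bspan (fun y => y \in F) a,
                                        bsmul (pi ^+ n) T b & x = a + b])].

Definition nuclear (V : idomainType) (pi : V) (M : lmodType V)
  (B : (M -> Prop) -> Prop) : Prop := forall S, B S -> compactoid pi B S.

(* completion of a bornological V-module, by its universal property *)
Definition is_completion (V : idomainType) (pi : V) (M : lmodType V) (BM : (M -> Prop) -> Prop)
  (N : lmodType V) (BN : (N -> Prop) -> Prop) (i : M -> N) : Prop :=
  [/\ bmod BN, bcomplete pi BN, blin i, bounded_map BM BN i &
    forall (W : lmodType V) (BW : (W -> Prop) -> Prop), bmod BW -> bcomplete pi BW ->
      forall f : M -> W, blin f -> bounded_map BM BW f ->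
        exists! g : N -> W, [/\ blin g, bounded_map BN BW g & forall x, g (i x) = f x]].

(* (D, i) is a dagger completion R^dagger of (R, mul, B): the completion of R with
   the linear growth bornology, with its algebra structure making i a homomorphism *)
Definition dagger_completion (V : idomainType) (pi : V) (R : lmodType V) (mulR : R -> R -> R)
  (BR : (R -> Prop) -> Prop) (D : lmodType V) (mulD : D -> D -> D)
  (BD : (D -> Prop) -> Prop) (i : R -> D) : Prop :=
  [/\ balg mulD BD, bhom mulR mulD i & is_completion pi (lgborn pi mulR BR) BD i].

(* Main.v *)
Require Import Defs.
From mathcomp Require Import all_boot all_order all_algebra.
Set Implicit Arguments.
Unset Strict Implicit.
Unset Printing Implicit Defensive.
Import GRing.Theory.
Local Open Scope ring_scope.

Lemma born_sub (M : eqType) (B : (M -> Prop) -> Prop) S T :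
  bornology B -> bsubs S T -> B T -> B S.
Proof. by move=> [_ _ H] /H. Qed.

Lemma compactoid_B (V : idomainType) (pi : V) (M : lmodType V) B S :
  bornology B -> @compactoid V pi M B S -> B S.
Proof. move=> HB [T [HT _ HST _]]; exact: born_sub HB HST HT. Qed.

Lemma gen_born_sub (M : eqType) F (X Y : M -> Prop) :
  bsubs X Y -> gen_born F Y -> gen_born F X.
Proof. move=> HXY HY B' HB HF; exact: born_sub HB HXY (HY B' HB HF). Qed.

Lemma gen_born_mono (M : eqType) (F F' : (M -> Prop) -> Prop) X :
  (forall Y, F Y -> F' Y) -> gen_born F X -> gen_born F' X.
Proof. move=> HFF HX B' HB HF; apply: HX HB _ => Y /HFF; exact: HF. Qed.

Lemma lgset_self (V : idomainType) (pi : V) (M : lmodType V) mul (S : M -> Prop) :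
  bsubs S (lgset pi mul S).
Proof.
move=> x Sx T _ HT; apply: HT; exists 0%N, x, [::]; split => //.
by rewrite expr0 scale1r.
Qed.

Lemma B_lgborn (V : idomainType) (pi : V) (M : lmodType V) mul B (S : M -> Prop) :
  B S -> lgborn pi mul B S.
Proof.
move=> HS B' HB HF; apply: (born_sub HB (@lgset_self _ pi _ mul S)).
by apply: HF; exists S.
Qed.

Lemma blin0 (V : idomainType) (M N : lmodType V) (f : M -> N) : blin f -> f 0 = 0.
Proof.
move=> Hf; have := Hf (-1) 0 0.
by rewrite scaler0 addr0 scaleN1r addNr.
Qed.

Lemma blinD (V : idomainType) (M N : lmodType V) (f : M -> N) x y : blin f -> f (x + y) = f x + f y.
Proof. by move=> Hf; have := Hf 1 x y; rewrite !scale1r. Qed.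

Lemma blinZ (V : idomainType) (M N : lmodType V) (f : M -> N) a x : blin f -> f (a *: x) = a *: f x.
Proof. by move=> Hf; have := Hf a x 0; rewrite !addr0 blin0 // addr0. Qed.

Lemma blin_comp (V : idomainType) (M N P : lmodType V) (f : M -> N) (g : N -> P) :
  blin f -> blin g -> blin (fun x => g (f x)).
Proof. by move=> Hf Hg a x y; rewrite Hf Hg. Qed.

Lemma blin_id (V : idomainType) (M : lmodType V) : blin (fun x : M => x).
Proof. by []. Qed.

Lemma bounded_comp (M N : Type) (P : eqType) BM BN BP (f : M -> N) (g : N -> P) :
  bounded_map BM BN f -> bounded_map BN BP g -> bornology BP -> bounded_map BM BP (fun x => g (f x)).
Proof.
move=> Hf Hg HB S HS.
apply: (born_sub HB _ (Hg _ (Hf _ HS))).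
by move=> z [x [Sx ->]]; exists (f x); split => //; exists x.
Qed.

Lemma bounded_id (M : eqType) (B : (M -> Prop) -> Prop) :
  bornology B -> bounded_map B B (fun x => x).
Proof. by move=> HB S HS; apply: born_sub HB _ HS => x [y [Sy ->]]. Qed.

Lemma bounded_weak (M N : Type) BM BM' BN BN' (f : M -> N) :
  (forall S, BM' S -> BM S) -> (forall S, BN S -> BN' S) ->
  bounded_map BM BN f -> bounded_map BM' BN' f.
Proof. by move=> H1 H2 Hf S /H1 /Hf /H2. Qed.

Lemma bspan_submod (V : idomainType) (M : lmodType V) (X : M -> Prop) : submod (bspan X).
Proof.
split.
- by move=> T [H0 _ _] _.
- by move=> x y Hx Hy T HT HXT; case: (HT) => _ HD _; apply: HD; [apply: Hx|apply: Hy].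
- by move=> a x Hx T HT HXT; case: (HT) => _ _ HZ; apply: HZ; apply: Hx.
Qed.

Lemma compactoid_image (V : idomainType) (pi : V) (M N : lmodType V) BM BN (g : M -> N) S :
  blin g -> bounded_map BM BN g -> compactoid pi BM S -> compactoid pi BN (bimage g S).
Proof.
move=> Hl Hb [T [HT [T0 TD TZ] HST Happ]].
exists (bimage g T); split.
- exact: Hb.
- split.
  + by exists 0; split => //; rewrite blin0.
  + by move=> _ _ [x [Tx ->]] [y [Ty ->]]; exists (x + y); split; [apply: TD|rewrite blinD].
  + by move=> a _ [x [Tx ->]]; exists (a *: x); split; [apply: TZ|rewrite blinZ].
- by move=> _ [x [Sx ->]]; exists x; split => //; apply: HST.
- move=> n; case: (Happ n) => F [HF HSF].
  exists (map g F); split.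
    by move=> y /mapP [y0 Hy0 ->]; exists y0; split => //; apply: HF.
  move=> _ [x [Sx ->]]; case: (HSF x Sx) => a [b [Ha [t [Tt ->]] ->]].
  exists (g a), (g (pi ^+ n *: t)); split.
  + pose T' := fun x => bspan (fun y => y \in map g F) (g x).
    apply: (Ha T').
      split; rewrite /T'.
      * by rewrite blin0 //; case: (bspan_submod (fun y => y \in map g F)).
      * by move=> x1 y1 H1 H2; rewrite blinD //; case: (bspan_submod (fun y => y \in map g F)) => _ HD _; apply: HD.
      * by move=> c x1 H1; rewrite blinZ //; case: (bspan_submod (fun y => y \in map g F)) => _ _ HZ; apply: HZ.
    move=> y Fy; rewrite /T' => T1 _ HT1; apply: HT1; exact: map_f.
  + by exists (g t); split; [exists t|rewrite blinZ].
  + by rewrite blinD.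
Qed.

Lemma uniq_fun (A B : Type) (P : (A -> B) -> Prop) g1 g2 :
  (exists! g, P g) -> P g1 -> P g2 -> forall x, g1 x = g2 x.
Proof. by move=> [g [_ Hu]] H1 H2 x; rewrite -(Hu _ H1) -(Hu _ H2). Qed.

Theorem proposition4p11 (V : idomainType) (pi : V)
  (R : lmodType V) (mulR_ : R -> R -> R) (BR : (R -> Prop) -> Prop)
  (D : lmodType V) (mulD_ : D -> D -> D) (BD : (D -> Prop) -> Prop) (iota : R -> D)
  (E : lmodType V) (mulE_ : E -> E -> E) (BE : (E -> Prop) -> Prop) (j : R -> E)
  (phi : E -> D) :
  cdvr pi ->
  balg mulR_ BR -> torsionfree pi BR ->
  (* (D, iota) = R^dagger *)
  dagger_completion pi mulR_ BR mulD_ BD iota ->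
  (* (E, j) = (R')^dagger *)
  dagger_completion pi mulR_ (compactoid pi BR) mulE_ BE j ->
  (* phi : (R')^dagger -> (R^dagger)' the canonical map *)
  bhom mulE_ mulD_ phi -> bounded_map BE (compactoid pi BD) phi ->
  (forall x, phi (j x) = iota x) ->
  (nuclear pi BR \/ dagger_alg pi mulR_ BR) ->
  exists psi : D -> E,
    [/\ bhom mulD_ mulE_ psi, bounded_map (compactoid pi BD) BE psi,
        (forall x, psi (phi x) = x) & (forall y, phi (psi y) = y)].
Proof.
move=> _ HbR _ [HbD HhomI [HmD HcD HlI HbI HUD]] [HbE HhomJ [HmE HcE HlJ HbJ HUE]]
  [HlP HmP] HbP HPJ Hcase.
have bornD : bornology BD by case: HmD.
have bornE : bornology BE by case: HmE.
have HjC : bounded_map (compactoid pi BR) BE j.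
  by apply: bounded_weak HbJ => // S; apply: B_lgborn.
have [psi [Hl Hb Hj Hpp]] : exists psi : D -> E,
  [/\ blin psi, bounded_map (compactoid pi BD) BE psi, (forall x, psi (iota x) = j x)
    & forall y, phi (psi y) = y].
  case: Hcase => [Hnuc | [HbalgR HcR _ HsdR]].
  - have HbRj : bounded_map (lgborn pi mulR_ BR) BE j.
      move=> S HS; apply: HbJ; apply: gen_born_mono HS => Y [S0 [HS0 ->]].
      by exists S0; split => //; apply: Hnuc.
    case: (HUD E BE HmE HcE j HlJ HbRj) => psi [[Hl Hb Hj] _].
    exists psi; split => //.
    + by apply: bounded_weak Hb => // S; apply: compactoid_B.
    + apply: (uniq_fun (HUD D BD HmD HcD iota HlI HbI)); split => //.
      * exact: blin_comp.
      * apply: (bounded_comp Hb _ bornD); apply: bounded_weak HbP => // S; exact: compactoid_B.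
      * by move=> x; rewrite Hj HPJ.
      * exact: bounded_id.
  - have HmR : bmod BR by case: HbalgR.
    have bornR : bornology BR by case: HmR.
    have Hid : bounded_map (lgborn pi mulR_ BR) BR (fun x => x).
      move=> S HS; apply: born_sub bornR _ (HS BR bornR _).
        by move=> x [y [Sy ->]].
      by move=> Y [S0 [HS0 ->]]; apply: HsdR.
    case: (HUD R BR HmR HcR (fun x => x) (@blin_id _ _) Hid) => g [[Hlg Hbg Hg] _].
    have Hig : forall y, iota (g y) = y.
      apply: (uniq_fun (HUD D BD HmD HcD iota HlI HbI)); split => //.
      * exact: blin_comp.
      * apply: (bounded_comp Hbg _ bornD); apply: bounded_weak HbI => // S; exact: B_lgborn.
      * by move=> x; rewrite Hg.
      * exact: bounded_id.
    exists (fun y => j (g y)); split.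
    + exact: blin_comp.
    + apply: (bounded_comp _ HjC bornE) => S' HS'; exact: compactoid_image HS'.
    + by move=> x; rewrite Hg.
    + by move=> y; rewrite HPJ Hig.
have Hpp' : forall x, psi (phi x) = x.
  apply: (uniq_fun (HUE E BE HmE HcE j HlJ HbJ)); split => //.
  - exact: blin_comp.
  - exact: bounded_comp HbP Hb bornE.
  - by move=> x; rewrite HPJ Hj.
  - exact: bounded_id.
exists psi; split => //.
split => //.
by move=> x y; rewrite -{1}(Hpp x) -{1}(Hpp y) -HmP Hpp'.
Qed.
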